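(* Let $m\ge5$ with $m\equiv1\pmod4$, let $N=3^m-1$ and $v=\frac{3^m-1}{2}-3^{(m-1)/2}-1$. Then $\gcd(v,N)=1$, and for every integer $i$ with $0\le i\le\frac{3^{(m-1)/2}-1}{4}$, the $3$-weight of $v(1+2i)\bmod N$ is congruent to $3$ modulo $4$ (i.e. the $3$-adic digit vector of $v(1+2i)\bmod N$ lies in $S_3(m)$).
   Context: For an integer $i$, $i\bmod N$ is the unique $s\in\{0,\dots,N-1\}$ with $N\mid i-s$. For $0\le s\le 3^m-1$ with $3$-adic expansion $s=\sum_{j=0}^{m-1}s_j3^j$, $s_j\in\{0,1,2\}$, the $3$-weight is $\mathrm{wt}_3(s)=\sum_j s_j$. $S_j(m)=\{(i_0,\dots,i_{m-1})\in\{0,1,2\}^m:\sum i_k\equiv j\pmod 4\}$. *)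

(* Defs.v *)
From mathcomp Require Import all_boot.
Set Implicit Arguments. Unset Strict Implicit. Unset Printing Implicit Defensive.

Definition digit3 (s j : nat) : nat := (s %/ 3 ^ j) %% 3.

Definition wt3 (m s : nat) : nat := \sum_(j < m) digit3 s j.

(* Main.v *)
Require Import Defs.
From mathcomp Require Import all_boot zify.
Lemma arA w i : let R := w + 2 * i + 1 in
  (6*R*R + 3*R + w + 2*i) * (1 + 2*i) = i*(12*R*R+12*R+2) + ((w + (2*R+1))*(2*R+1) + w).
Proof. rewrite /=; lia. Qed.
Lemma arAlt w R : w < R -> (w + (2*R+1))*(2*R+1) + w < 12*R*R+12*R+2.
Proof. move=> h; have : w * R <= R * R by rewrite leq_mul2r ltnW ?orbT. lia. Qed.
Lemma arB j : let R := 2 * (j+1) in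
  (6*R*R + 3*R + (R - 1)) * (1 + 2*(j+1)) = (j+1)*(12*R*R+12*R+2) + ((2*R+1-2)*(2*R+1) + (2*R+1-1)).
Proof. rewrite /=. have -> : 2 * (2 * (j + 1)) + 1 - 2 = 4*j+3 by lia.
have -> : 2 * (j + 1) - 1 = 2*j+1 by lia.
have -> : 2 * (2 * (j + 1)) + 1 - 1 = 4*j+4 by lia. lia. Qed.
Lemma arBlt R : 0 < R -> (2*R+1-2)*(2*R+1) + (2*R+1-1) < 12*R*R+12*R+2.
Proof. move=> h. have -> : 2*R+1-2 = 2*R - 1 by lia. have : (2*R-1)*(2*R+1) <= (2*R+1)*(2*R+1) by rewrite leq_mul2r; apply/orP; right; lia. lia. Qed.

Lemma wt3_split k l a b : b < 3 ^ k ->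
  wt3 (k + l) (a * 3 ^ k + b) = wt3 k b + wt3 l a.
Proof.
move=> hb; rewrite /wt3 big_split_ord /=; congr (_ + _).
  apply: eq_bigr => j _ /=; rewrite /digit3.
  have hj : j < k := ltn_ord j.
  have -> : 3 ^ k = 3 ^ (k - j).-1 * 3 * 3 ^ j.
    by rewrite -expnSr prednK ?subn_gt0 // -expnD subnK // ltnW.
  rewrite mulnA divnMDl ?expn_gt0 //.
  by rewrite mulnA -modnDm modnMl add0n modn_mod.
apply: eq_bigr => j _ /=; rewrite /digit3 expnD divnMA divnMDl ?expn_gt0 //.
by rewrite (divn_small hb) addn0.
Qed.

Lemma wt3_1 b : wt3 1 b = b %% 3.
Proof. by rewrite /wt3 big_ord1 /digit3 expn0 divn1. Qed.

Lemma wt3_par n s : s < 3 ^ n -> wt3 n s %% 2 = s %% 2.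
Proof.
elim: n s => [|n IH] s hs.
  by move: hs; rewrite expn0 ltnS leqn0 => /eqP ->; rewrite /wt3 big_ord0.
rewrite [in RHS](divn_eq s 3) -add1n [in LHS](divn_eq s 3) wt3_split ?ltn_mod //.
have h1 : s %/ 3 < 3 ^ n by rewrite ltn_divLR // -expnSr.
have := IH _ h1; rewrite wt3_1 modn_mod.
set a := s %/ 3; set d := s %% 3; move=> H.
have : d < 3 by rewrite ltn_mod.
lia.
Qed.

Lemma wt3_all2 k : wt3 k (3 ^ k - 1) = 2 * k.
Proof.
elim: k => [|k IH]; first by rewrite /wt3 big_ord0.
have -> : 3 ^ k.+1 - 1 = (3 ^ k - 1) * 3 + 2.
  have := expn_gt0 3 k; rewrite expnS; lia.
by rewrite -add1n wt3_split // wt3_1 IH; lia.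
Qed.

Lemma wt3_21 k : 0 < k -> wt3 k (3 ^ k - 2) = 2 * k - 1.
Proof.
case: k => [//|k] _.
have -> : 3 ^ k.+1 - 2 = (3 ^ k - 1) * 3 + 1.
  have := expn_gt0 3 k; rewrite expnS; lia.
by rewrite -add1n wt3_split // wt3_1 wt3_all2; lia.
Qed.

Theorem lemma41 (m : nat) :
  5 <= m -> m %% 4 = 1 ->
  let N := 3 ^ m - 1 in
  let v := (3 ^ m - 1) %/ 2 - 3 ^ ((m - 1) %/ 2) - 1 in
  coprime v N /\
  (forall i : nat, i <= (3 ^ ((m - 1) %/ 2) - 1) %/ 4 ->
     wt3 m ((v * (1 + 2 * i)) %% N) %% 4 = 3).
Proof.
move=> hm5 hm4 N v.
set t := m %/ 4.
have ht : m = 2 * t + (2 * t + 1) by lia.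
have ht1 : 1 <= t by lia.
have hk : (m - 1) %/ 2 = 2 * t by lia.
set k := 2 * t.
set h := 3 ^ k.
have hN : 3 ^ m = 3 * h * h by rewrite ht expnD addn1 expnS -/k -/h; lia.
have h8 : h %% 8 = 1 by rewrite /h /k expnM -modnXm exp1n.
set R := (h - 1) %/ 2.
have hR : h = 2 * R + 1 by lia.
have hR4 : R %% 4 = 0 by lia.
have hRpos : 0 < R.
  have : 3 ^ 1 <= h by rewrite /h leq_exp2l // /k; lia.
  lia.
have eN : N = 12 * R * R + 12 * R + 2 by rewrite /N hN hR; lia.
have ev : v = 6 * R * R + 4 * R - 1.
  rewrite /v hN hk -/k -/h hR.
  have -> : 3 * (2 * R + 1) * (2 * R + 1) - 1 = 2 * (6 * R * R + 6 * R + 1) by lia.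
  rewrite mulKn //; lia.
split.
  have eN2 : N = 2 * v + 4 * (R + 1) by lia.
  rewrite /coprime eN2 gcdnMDl -/(coprime v _) coprimeMr; apply/andP; split.
    rewrite (_ : 4 = 2 * 2) // coprimeMr coprimen2 andbb.
    have : v %% 2 = 1 by lia.
    by rewrite modn2; case: (odd v).
  rewrite /coprime gcdnC (_ : v = (6 * R - 2) * (R + 1) + 1); last by lia.
  by rewrite gcdnMDl gcdn1.
move=> i; rewrite hk -/k -/h.
have -> : (h - 1) %/ 4 = R %/ 2 by lia.
move=> hi.
have hmk : m = k + (k + 1) by rewrite ht.
have hh1 : R < h by lia.
have [hA|hB] : 2 * i < R \/ 2 * i = R by lia.
- set w := R - 1 - 2 * i.
  have hw : R = w + 2 * i + 1 by lia.
  have hwh : w < h by lia.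
  have ev' : v = 6*R*R + 3*R + w + 2*i by lia.
  have ex : v * (1 + 2 * i) = i * N + ((w + h) * h + w).
    rewrite ev' eN hR; clearbody w R; subst R; exact: arA.
  have xN : (w + h) * h + w < N.
    rewrite eN hR; clearbody w R; apply: arAlt; lia.
  rewrite ex modnMDl (modn_small xN) hmk.
  have := wt3_split k (k+1) (w+h) w hwh; rewrite -/h => ->.
  have -> : w + h = 1 * h + w by rewrite mul1n addnC.
  have := wt3_split k 1 1 w hwh; rewrite -/h => ->; rewrite wt3_1.
  have wodd : w %% 2 = 1 by clear -hw hR4; lia.
  move: (wt3_par k w hwh) wodd; rewrite [1 %% 3]/=; clear.
  move: (wt3 k w) => W; lia.
- have ev' : v = 6*R*R + 3*R + (R - 1) by clear -ev hRpos; lia.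
  have ex : v * (1 + 2 * i) = i * N + ((h - 2) * h + (h - 1)).
    rewrite ev' eN hR; clearbody R; subst R.
    have hi1 : i = (i - 1) + 1 by lia.
    rewrite hi1; exact: arB.
  have xN : (h - 2) * h + (h - 1) < N.
    rewrite eN hR; apply: arBlt; lia.
  have h1 : h - 1 < 3 ^ k by rewrite /h; lia.
  have h2 : h - 2 < 3 ^ k by rewrite /h; lia.
  rewrite ex modnMDl (modn_small xN) hmk.
  have := wt3_split k (k+1) (h-2) (h-1) h1; rewrite -/h => ->.
  have -> : h - 2 = 0 * h + (h - 2) by [].
  have := wt3_split k 1 0 (h-2) h2; rewrite -/h => ->.
  rewrite wt3_1 /h wt3_all2 wt3_21 /k; first by clear -ht1; lia.
  by clear -ht1; lia.
Qed.
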